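(* Let $p$ be a prime number and let $1\to F\to H\to\bar H\to1$ be an exact sequence of finite groups such that $\bar H$ is abelian and generated by $r$ elements. Suppose that $|F|\le B\cdot|F_p|^e$ for some positive constants $B$ and $e$, where $F_p$ is a $p$-Sylow subgroup of $F$, and that $F$ is generated by $s$ elements. Then $H$ contains a characteristic abelian subgroup of order coprime to $p$ and index at most $B^{r+s}\cdot|H_p|^{e(r+s)+1}$, where $H_p$ is a $p$-Sylow subgroup of $H$. *)

(* Defs.v *)
From HB Require Import structures.
From mathcomp Require Import all_boot all_order all_algebra all_fingroup all_solvable.
From mathcomp Require Import reals exp.
Set Implicit Arguments. Unset Strict Implicit. Unset Printing Implicit Defensive.

Definition generated_by_at_most (gT : finGroupType) (G : {set gT}) (n : nat) : Prop :=
  exists X : {set gT}, #|X| <= n /\ <<X>>%g = G.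

(* Main.v *)
Require Import Defs.
From HB Require Import structures.
From mathcomp Require Import all_boot all_order all_algebra all_fingroup all_solvable.
From mathcomp Require Import reals exp.
Import Order.TTheory GRing.Theory Num.Theory.
Set Implicit Arguments. Unset Strict Implicit. Unset Printing Implicit Defensive.

Lemma cent_seq (gT : finGroupType) (H : {group gT}) (m : nat) (s : seq gT) :
  (forall x, x \in s -> #|(x ^: H)%g| <= m) ->
  exists K : {group gT}, [/\ (K \subset H)%g,
     (forall x, x \in s -> K \subset 'C[x]%g) & #|H : K|%g <= m ^ size s].
Proof.
elim: s => [|x s IH] hs.
  by exists H; split => //; rewrite indexgg.
have [K [KH Kc Ki]] : exists K : {group gT}, [/\ (K \subset H)%g,
     (forall x, x \in s -> K \subset 'C[x]%g) & #|H : K|%g <= m ^ size s].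
  by apply: IH => y ys; apply: hs; rewrite inE ys orbT.
exists ('C_K[x])%G; split.
- exact: subset_trans (subsetIl _ _) KH.
- move=> y; rewrite inE => /orP [/eqP -> | ys]; first exact: subsetIr.
  exact: subset_trans (subsetIl _ _) (Kc y ys).
- rewrite -(Lagrange_index KH (subsetIl K 'C[x]%g)) /= expnS mulnC.
  apply: leq_mul => //; rewrite index_cent1.
  apply: leq_trans (hs x _); last by rewrite inE eqxx.
  exact/subset_leq_card/classS.
Qed.

Lemma center_index (gT : finGroupType) (H F : {group gT}) (r s : nat) :
  (F <| H)%g -> abelian (H / F)%g ->
  generated_by_at_most (H / F)%g r ->
  generated_by_at_most F s ->
  #|H : 'Z(H)%g|%g <= #|F| ^ (r + s).
Proof.
move=> nFH abH [X [cX gX]] [Y [cY gY]].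
have FH := normal_sub nFH; have nF := normal_norm nFH.
set T := ((fun xb : coset_of F => repr xb) @: X)%g.
have XH : X \subset (H / F)%g by rewrite -gX subset_gen.
have TH : T \subset H.
  apply/subsetP => t /imsetP [xb xbX ->].
  rewrite -(quotientGK nFH); apply: mem_morphpre; first exact: repr_coset_norm.
  by have := coset_reprK xb; move=> /= ->; apply: (subsetP XH).
have YF : Y \subset F by rewrite -gY subset_gen.
have HG : H \subset <<T :|: Y>>%g.
  have FG : F \subset <<T :|: Y>>%g by rewrite -{1}gY genS // subsetUr.
  rewrite -(quotientSGK nF FG) -gX gen_subG.
  apply/subsetP => xb xbX; rewrite -(coset_reprK xb).
  by apply: mem_quotient; apply: mem_gen; rewrite inE; apply/orP; left; apply: imset_f.
have der : (H^`(1) \subset F)%g by apply: der1_min.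
have hcl : forall x, x \in enum (T :|: Y) -> #|(x ^: H)%g| <= #|F|.
  move=> x; rewrite mem_enum inE => /orP [xT | xY].
    have xH := subsetP TH x xT.
    rewrite -(card_lcoset F x); apply: subset_leq_card.
    apply/subsetP => y /imsetP [h hH ->]; rewrite mem_lcoset conjg_mulR mulKg.
    by apply: (subsetP der); apply: mem_commg.
  apply: subset_leq_card; apply/subsetP => y /imsetP [h hH ->].
  by rewrite memJ_norm ?(subsetP nF) ?(subsetP YF).
have [K [KH Kc Ki]] := cent_seq hcl.
have KC : K \subset 'C(H)%g.
  apply: subset_trans (centS HG); rewrite cent_gen.
  apply/centsP => k kK a aA.
  have := Kc a; rewrite mem_enum => /(_ aA) /subsetP /(_ k kK) /cent1P.
  by [].
have KZ : K \subset 'Z(H)%g by rewrite /center subsetI KH.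
rewrite -(Lagrange_index (center_sub H) KZ) in Ki.
apply: leq_trans _ (leq_trans Ki _).
  by rewrite leq_pmulr // indexg_gt0.
have F0 : 0 < #|F| by [].
apply: leq_pexp2l => //; rewrite -cardE.
apply: leq_trans (leq_card_setU _ _) _; apply: leq_add => //.
exact: leq_trans (leq_imset_card _ _) cX.
Qed.
Theorem lemma2p9 (R : realType) (p : nat) (gT : finGroupType)
    (H F : {group gT}) (r s : nat) (B e : R)
    (Fp Hp : {group gT}) :
  prime p ->
  (F <| H)%g ->
  abelian (H / F)%g ->
  generated_by_at_most (H / F)%g r ->
  generated_by_at_most F s ->
  (0 < B)%R -> (0 < e)%R ->
  (p.-Sylow(F) Fp)%g ->
  (#|F|%:R <= B * powR (#|Fp|%:R) e)%R ->
  (p.-Sylow(H) Hp)%g ->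
  exists A : {group gT},
    [/\ (A \char H)%g, abelian A, coprime #|A| p &
        (#|H : A|%g%:R <= B ^+ (r + s) * powR (#|Hp|%:R) (e * (r + s)%:R + 1))%R].
Proof.
move=> pp nFH abH gH gF B0 e0 sylF hF sylH.
have FH := normal_sub nFH.
exists ('O_p^'('Z(H)))%G; split.
- exact: char_trans (pcore_char _ _) (center_char _).
- exact: abelianS (pcore_sub _ _) (center_abelian _).
- exact: p'nat_coprime (pcore_pgroup _ _) (pnat_id pp).
have h1 := center_index nFH abH gH gF.
have hall := nilpotent_pcore_Hall p^' (abelian_nil (center_abelian H)).
have h2 : #|'Z(H)%g : 'O_p^'('Z(H))|%g <= #|Hp|.
  move: hall => /and3P [_ _]; rewrite pnatNK => hi.
  rewrite -(part_pnat_id hi) (card_Hall sylH).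
  apply: dvdn_leq => //; apply: partn_dvd => //.
  exact: dvdn_trans (dvdn_indexg _ _) (cardSg (center_sub H)).
have h3 : #|Fp| <= #|Hp|.
  rewrite (card_Hall sylF) (card_Hall sylH).
  by apply: dvdn_leq => //; apply: partn_dvd => //; apply: cardSg.
rewrite -(Lagrange_index (center_sub H) (pcore_sub p^' _)) natrM.
have hp0 : (0 < #|Hp|%:R :> R)%R by rewrite ltr0n.
rewrite powRD; last by apply/implyP => _; exact: lt0r_neq0.
rewrite powRr1; last exact: ltW hp0.
rewrite mulrA.
apply: ler_pM => //; last by rewrite ler_nat.
set n := (r + s)%N.
apply: le_trans (_ : (#|F|%:R ^+ n <= _)%R).
  by rewrite -natrX ler_nat.
apply: le_trans (_ : ((B * powR #|Hp|%:R e) ^+ n <= _)%R).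
  apply: lerXn2r; rewrite ?nnegrE //.
    by apply: mulr_ge0; [exact: ltW | exact: powR_ge0].
  apply: le_trans hF _; apply: ler_wpM2l; first exact: ltW.
  apply: ge0_ler_powR; [exact: ltW | by rewrite nnegrE | by rewrite nnegrE ltW | by rewrite ler_nat].
by rewrite exprMn powRrM powR_mulrn // powR_ge0.
Qed.
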